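(* Let $\beta\in(-2,-1)$ and $c\in(0,1)$. For integers $n\ge 3$ let $x_{1,n}<\dots<x_{n,n}$ denote the zeros of the monic Meixner polynomial $M_n(x;\beta,c)$ (when real), let $y_{1,n}<\dots<y_{n,n}$ denote the zeros of $M_n(x;\beta+2,c)$, and put $A_n=\frac{\beta}{c-1}-\beta-n-1$. (a) If $n\geq \frac{\beta}{c-1}-(\beta+1)$, then $A_n\leq 0$ and $$x_{1,n}<y_{1,n}<x_{2,n}<y_{2,n}<\dots<x_{n,n}<y_{n,n}.$$ (b) There is at most one integer $n^*$ with $\frac{\beta}{c-1}-(\beta+2)<n^*<\frac{\beta}{c-1}-(\beta+1)$, and for such $n^*$ one has $0<A_{n^*}<1$. If moreover $n^*\in\left(\frac{\beta}{c-1},\frac{\beta}{c-1}-(\beta+1)\right)$, then the zeros of $M_{n^*}(x;\beta,c)$ and $M_{n^*}(x;\beta+2,c)$ satisfy $x_{1,n^*}<y_{1,n^*}<x_{2,n^*}<y_{2,n^*}<\dots<x_{n^*,n^*}<y_{n^*,n^*}$ if and only if $A_{n^*}<y_{1,n^*}$.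
   Context: Monic Meixner polynomials are defined by $$M_n(x;\beta,c)=\left(\frac{c}{c-1}\right)^n(\beta)_n\sum_{k=0}^{n}\frac{(-n)_k(-x)_k(1-\frac1c)^k}{(\beta)_k\,k!},$$ for real $\beta,c$ with $c\neq 0$ and $\beta\notin\{-1,-2,\dots,-n+1\}$, where $(\alpha)_0=1$ and $(\alpha)_k=\alpha(\alpha+1)\cdots(\alpha+k-1)$ for $k\geq1$. For $\beta+2>0$ and $c\in(0,1)$ the polynomials $M_n(x;\beta+2,c)$ are orthogonal and have real, simple, positive zeros; for $\beta\in(-2,-1)$, $c\in(0,1)$ and $n>\frac{\beta}{c-1}$, the zeros of $M_n(x;\beta,c)$ are real, simple and positive. *)

(* Defs.v *)
From HB Require Import structures.
From mathcomp Require Import all_boot all_order all_algebra.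
Set Implicit Arguments. Unset Strict Implicit. Unset Printing Implicit Defensive.
Import Order.TTheory GRing.Theory Num.Theory.
Local Open Scope ring_scope.

Definition poch (R : realFieldType) (a : R) (k : nat) : R :=
  \prod_(i < k) (a + i%:R).

(* the polynomial x |-> (-x)_k *)
Definition pochNX (R : realFieldType) (k : nat) : {poly R} :=
  \prod_(i < k) (i%:R%:P - 'X).

Definition meixner (R : realFieldType) (n : nat) (beta c : R) : {poly R} :=
  ((c / (c - 1)) ^+ n * poch beta n) *:
  \sum_(k < n.+1)
     ((poch (- n%:R) k * (1 - c^-1) ^+ k / (poch beta k * k`!%:R)) *: pochNX R k).

Definition zeros_enum (R : realFieldType) (p : {poly R}) (n : nat) (xs : seq R) : Prop :=
  [/\ size xs = n, sorted <%R xs, (forall x, x \in xs -> root p x)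
    & (forall x, root p x -> x \in xs)].

(* x_1 < y_1 < x_2 < y_2 < ... < x_n < y_n (0-based indices) *)
Definition interlace (R : realFieldType) (n : nat) (xs ys : seq R) : Prop :=
  forall i, (i < n)%N -> xs`_i < ys`_i /\ ((i.+1 < n)%N -> ys`_i < xs`_i.+1).

Definition A_n (R : realFieldType) (beta c : R) (n : nat) : R :=
  beta / (c - 1) - beta - n%:R - 1.

(* Main.v *)
Require Import Defs.
From HB Require Import structures.
From mathcomp Require Import all_boot all_order all_algebra.
From mathcomp Require Import polyrcf.
From mathcomp Require Import zify ring lra.
Import Order.TTheory GRing.Theory Num.Theory.
Local Open Scope ring_scope.
Set Implicit Arguments. Unset Strict Implicit. Unset Printing Implicit Defensive.

Section Roots.
Variable R : rcfType.

Lemma signM n : (-1) ^+ n * (-1) ^+ n = 1 :> R.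
Proof. by rewrite -exprMn mulrNN mulr1 expr1n. Qed.

Lemma monic_of_coef (p : {poly R}) n : (size p <= n.+1)%N -> p`_n = 1 ->
  p \is monic /\ size p = n.+1.
Proof.
move=> hle hn.
have hs : size p = n.+1.
  apply/eqP; rewrite eqn_leq hle /= ltnNge; apply/negP => h.
  by move: hn; rewrite nth_default // => /eqP; rewrite eq_sym oner_eq0.
by split => //; rewrite monicE lead_coefE hs /= hn.
Qed.

Lemma fin_choice (Q : nat -> R -> Prop) k :
  (forall j, (j < k)%N -> exists x, Q j x) ->
  exists r : nat -> R, forall j, (j < k)%N -> Q j (r j).
Proof.
elim: k => [|k IH] h; first by exists (fun _ => 0).
have [r hr] : exists r : nat -> R, forall j, (j < k)%N -> Q j (r j).
  by apply: IH => j hj; apply: h; rewrite ltnW.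
have [x hx] := h k (ltnSn k).
exists (fun j => if j == k then x else r j) => j hj.
case: eqP => [->//|/eqP hjk]; by apply: hr; rewrite ltn_neqAle hjk -ltnS hj.
Qed.

Lemma incr_le (f : nat -> R) n : (forall i, (i.+1 < n)%N -> f i < f i.+1) ->
  forall i j, (i <= j)%N -> (j < n)%N -> f i <= f j.
Proof.
move=> h i j hij; elim: j hij => [|j IH] hij hj.
  by move: hij; rewrite leqn0 => /eqP ->.
move: hij; rewrite leq_eqVlt => /orP [/eqP -> //| hij].
apply: le_trans (IH hij (ltnW hj)) _; apply: ltW; apply: h.
done.
Qed.

Lemma incr_lt (f : nat -> R) n : (forall i, (i.+1 < n)%N -> f i < f i.+1) ->
  forall i j, (i < j)%N -> (j < n)%N -> f i < f j.
Proof.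
move=> h i j hij hj; case: j hij hj => [//|j] hij hj.
apply: le_lt_trans (incr_le h _ _) (h _ hj) => //; exact: ltnW.
Qed.

Lemma sorted_map_iota (r : nat -> R) m n :
  (forall i, (m <= i)%N -> (i.+1 < m + n)%N -> r i < r i.+1) ->
  sorted <%R (map r (iota m n)).
Proof.
elim: n m => [//|n IH] m h /=.
case: n IH h => [//|n] IH h /=.
rewrite (h m) //; last by lia.
have := IH m.+1; rewrite /= => -> // i hi hi2; apply: h; lia.
Qed.

Lemma prod_pos (r : nat -> R) k x : (forall i, (i < k)%N -> r i < x) ->
  0 < (\prod_(i < k) ('X - (r i)%:P)).[x].
Proof.
move=> h; rewrite horner_prod; apply: prodr_gt0 => i _.
by rewrite hornerD hornerN hornerX hornerC subr_gt0 h.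
Qed.

Lemma sign_prod (r : nat -> R) k m x : (m <= k)%N ->
  (forall i, (i < m)%N -> r i < x) ->
  (forall i, (m <= i)%N -> (i < k)%N -> x < r i) ->
  0 < (-1) ^+ (k - m) * (\prod_(i < k) ('X - (r i)%:P)).[x].
Proof.
elim: k => [|k IH] hm h1 h2.
  by move: hm; rewrite leqn0 => /eqP ->; rewrite expr0 mul1r prod_pos.
move: hm; rewrite leq_eqVlt => /orP [/eqP|hm].
  by move=> hmk; subst m; rewrite subnn expr0 mul1r prod_pos.
rewrite big_ord_recr /= hornerM subSn // exprS.
have -> : - 1 * (-1) ^+ (k - m) * ((\prod_(i < k) ('X - (r i)%:P)).[x] *
     ('X - (r k)%:P).[x]) = ((-1) ^+ (k - m) * (\prod_(i < k) ('X - (r i)%:P)).[x]) *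
     (r k - x).
  by rewrite hornerD hornerN hornerX hornerC; ring.
apply: mulr_gt0; first by apply: IH => // i hi hik; apply: h2 => //; rewrite ltnW.
by rewrite subr_gt0 h2.
Qed.

Lemma roots_between (P : {poly R}) k (g : nat -> R) :
  P \is monic -> size P = k.+1 ->
  (forall j, (j < k)%N -> g j < g j.+1) ->
  (forall j, (j <= k)%N -> 0 < (-1) ^+ (k - j) * P.[g j]) ->
  exists r : nat -> R, P = \prod_(i < k) ('X - (r i)%:P) /\
     forall j, (j < k)%N -> g j < r j /\ r j < g j.+1.
Proof.
move=> hmon hsize hg hs.
have [r hr] : exists r : nat -> R, forall j, (j < k)%N ->
    (g j < r j /\ r j < g j.+1) /\ root P (r j).
  apply: (@fin_choice (fun j x => (g j < x /\ x < g j.+1) /\ root P x)) => j hj.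
  have h1 := hs j (ltnW hj); have h2 := hs j.+1 hj.
  have e : (k - j = (k - j.+1).+1)%N by lia.
  rewrite e exprS in h1.
  have hneg : P.[g j] * P.[g j.+1] < 0.
    have := mulr_gt0 h1 h2.
    have -> : -1 * (-1) ^+ (k - j.+1) * P.[g j] * ((-1) ^+ (k - j.+1) * P.[g j.+1])
       = - (((-1) ^+ (k - j.+1) * (-1) ^+ (k - j.+1)) * (P.[g j] * P.[g j.+1])) by ring.
    by rewrite signM mul1r oppr_gt0.
  have [x hx hrx] := poly_ivtoo (ltW (hg j hj)) hneg.
  by exists x; move: hx; rewrite in_itv /= => /andP [-> ->].
exists r; split; last by move=> j hj; case: (hr j hj).
have hinc : forall i, (0 <= i)%N -> (i.+1 < 0 + k)%N -> r i < r i.+1.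
  move=> i _ hi; have [[_ a] _] := hr i (ltnW hi); have [[b _] _] := hr i.+1 hi.
  exact: lt_trans a b.
have hsort := sorted_map_iota hinc.
have huniq : uniq (map r (iota 0 k)).
  by move: hsort; rewrite lt_sorted_uniq_le => /andP [].
have hall : all (root P) (map r (iota 0 k)).
  apply/allP => x /mapP [i]; rewrite mem_iota add0n => /andP [_ hi] ->.
  by case: (hr i hi).
rewrite -uniq_rootsE in huniq.
have [Q hQ] := uniq_roots_prod_XsubC hall huniq.
have hprod : \prod_(z <- map r (iota 0 k)) ('X - z%:P) = \prod_(i < k) ('X - (r i)%:P).
  by rewrite big_map -(big_mkord xpredT (fun i => 'X - (r i)%:P)) /index_iota subn0.
rewrite hprod in hQ.
have hPm : \prod_(i < k) ('X - (r i)%:P) \is monic by apply: monic_prod_XsubC.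
have hP0 : P != 0 by apply: monic_neq0.
have hQ0 : Q != 0 by apply: contraNneq hP0 => hq; rewrite hQ hq mul0r.
have hsQ : size Q = 1%N.
  move: hsize; rewrite hQ size_Mmonic // -hprod size_prod_XsubC size_map size_iota.
  move=> h; rewrite addnS /= in h. move: h. set s := size Q. move=> h. lia.
have hQc := size1_polyC (eq_leq hsQ).
move/monicP: hmon; rewrite hQ lead_coef_Mmonic // hQc lead_coefC => hq.
by rewrite hq mul1r.
Qed.


Lemma prod_ord_seq (r : nat -> R) k :
  \prod_(i < k) ('X - (r i)%:P) = \prod_(z <- map r (iota 0 k)) ('X - z%:P).
Proof. by rewrite big_map -(big_mkord xpredT (fun i => 'X - (r i)%:P)) /index_iota subn0. Qed.

Lemma size_prod_ord (r : nat -> R) k : size (\prod_(i < k) ('X - (r i)%:P)) = k.+1.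
Proof. by rewrite prod_ord_seq size_prod_XsubC size_map size_iota. Qed.

Lemma prod_root (r : nat -> R) k i : (i < k)%N -> (\prod_(l < k) ('X - (r l)%:P)).[r i] = 0.
Proof.
move=> hi; rewrite horner_prod (bigD1 (Ordinal hi)) //= hornerD hornerN hornerX hornerC.
by rewrite subrr mul0r.
Qed.

Lemma zeros_prod (r : nat -> R) k (P : {poly R}) :
  P = \prod_(i < k) ('X - (r i)%:P) -> (forall i, (i.+1 < k)%N -> r i < r i.+1) ->
  zeros_enum P k (mkseq r k) /\ (forall xs, zeros_enum P k xs -> xs = mkseq r k).
Proof.
move=> hP hinc.
have hs : sorted <%R (mkseq r k) by apply: sorted_map_iota => i _; rewrite add0n; apply: hinc.
have hroot : forall x, root P x = (x \in mkseq r k).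
  by move=> x; rewrite hP prod_ord_seq root_prod_XsubC.
split.
  split; first by rewrite size_mkseq.
  - exact: hs.
  - by move=> x; rewrite hroot.
  - by move=> x; rewrite hroot.
move=> xs [_ hs' h1 h2]; apply: lt_sorted_eq => // x.
apply/idP/idP; first by move/h1; rewrite hroot.
by rewrite -hroot; apply: h2.
Qed.

End Roots.

Section Alg.
Variable R : rcfType.

Local Notation e := (pochNX R).

Lemma pochS (a : R) k : poch a k.+1 = poch a k * (a + k%:R).
Proof. by rewrite /poch big_ord_recr. Qed.

Lemma poch0 (a : R) : poch a 0 = 1.
Proof. by rewrite /poch big_ord0. Qed.

Lemma pochSl (a : R) k : poch a k.+1 = a * poch (a + 1) k.
Proof.
rewrite /poch big_ord_recl /= addr0; congr (_ * _).
apply: eq_bigr => i _; rewrite /bump /= add1n -natr1; ring.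
Qed.

Lemma pochN_Sl (n j : nat) : poch (- n.+1%:R : R) j.+1 = - n.+1%:R * poch (- n%:R) j.
Proof. by rewrite pochSl -natr1 opprD addrNK. Qed.

Lemma pochN0 (n k : nat) : (n < k)%N -> poch (- n%:R : R) k = 0.
Proof.
move=> hnk; rewrite /poch (bigD1 (Ordinal hnk)) //= addNr mul0r //.
Qed.

Lemma eS k : e k.+1 = e k * (k%:R%:P - 'X).
Proof. by rewrite /pochNX big_ord_recr. Qed.

Lemma Xe (a : R) k : ('X - a%:P) * e k = (k%:R - a) *: e k - e k.+1.
Proof.
rewrite eS -!mul_polyC polyCB.
by rewrite mulrBr mulrBl mulrBl !(mulrC (e k)); ring.
Qed.

Definition S (N : nat) (F : nat -> R) : {poly R} := \sum_(k < N) F k *: e k.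

Lemma S_eq N F G : (forall k, (k < N)%N -> F k = G k) -> S N F = S N G.
Proof. by move=> h; rewrite /S; apply: eq_bigr => i _; rewrite h. Qed.

Lemma S_ext M N F : (forall k, (M <= k)%N -> F k = 0) -> (M <= N)%N -> S N F = S M F.
Proof.
move=> h hMN; rewrite /S (big_ord_widen N (fun k => F k *: e k) hMN).
rewrite [in RHS]big_mkcond /=.
apply: eq_bigr => i _; case: ifP => // /negbT; rewrite -leqNgt => /h ->.
by rewrite scale0r.
Qed.

Lemma S_add N F G : S N F + S N G = S N (fun k => F k + G k).
Proof. by rewrite /S -big_split; apply: eq_bigr => i _; rewrite scalerDl. Qed.

Lemma S_scale N a F : a *: S N F = S N (fun k => a * F k).
Proof. by rewrite /S scaler_sumr; apply: eq_bigr => i _; rewrite scalerA. Qed.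

Definition pr (F : nat -> R) k := if k is j.+1 then F j else 0.

Lemma S_X N a F : F N = 0 ->
  ('X - a%:P) * S N F = S N.+1 (fun k => F k * (k%:R - a) - pr F k).
Proof.
move=> hN; rewrite /S mulr_sumr.
under eq_bigr => i _ do rewrite -scalerAr Xe scalerBr scalerA.
rewrite sumrB.
under [in RHS]eq_bigr => i _ do rewrite scalerBl.
rewrite sumrB big_ord_recr /= hN mul0r scale0r addr0 big_ord_recl /= scale0r add0r.
done.
Qed.

Variable c : R.
Hypothesis c0 : 0 < c.
Hypothesis c1 : c < 1.

Definition u := 1 - c^-1.
Definition w := c / (c - 1).
Definition g n (b : R) k := poch (- n%:R) k * u ^+ k / (poch b k * k`!%:R).

Lemma meixnerE n b : meixner n b c = (w ^+ n * poch b n) *: S n.+1 (g n b).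
Proof. by []. Qed.

Lemma g_high n b k : (n < k)%N -> g n b k = 0.
Proof. by move=> h; rewrite /g pochN0 // !mul0r. Qed.

Lemma meixnerE' n b N : (n < N)%N -> meixner n b c = (w ^+ n * poch b n) *: S N (g n b).
Proof. by move=> h; rewrite meixnerE (@S_ext n.+1 N) // => k; apply: g_high. Qed.


Lemma S_sub N F G : S N F - S N G = S N (fun k => F k - G k).
Proof. by rewrite /S -sumrB; apply: eq_bigr => i _; rewrite scalerBl. Qed.

Lemma poch_gt0 (b : R) k : 0 < b -> 0 < poch b k.
Proof.
move=> hb; rewrite /poch; apply: prodr_gt0 => i _.
by apply: ltr_wpDr.
Qed.

Lemma fact_neq0 k : (k`!%:R : R) != 0.
Proof. by rewrite pnatr_eq0 -lt0n fact_gt0. Qed.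

Lemma natS_neq0 k : (k.+1%:R : R) != 0.
Proof. by rewrite pnatr_eq0. Qed.

Lemma c_neq0 : c != 0. Proof. by rewrite gt_eqF. Qed.
Lemma c1_neq0 : c - 1 != 0. Proof. by rewrite subr_eq0 lt_eqF. Qed.
Lemma c1'_neq0 : 1 - c != 0. Proof. by rewrite subr_eq0 gt_eqF. Qed.

Definition bn (b : R) n := (n%:R + (n%:R + b) * c) / (1 - c).
Definition lam (b : R) n := n%:R * (n%:R + b - 1) * c / (1 - c) ^+ 2.

Lemma pochN_Sl2 (m j : nat) : poch (- m%:R : R) j.+1 =
  poch (- m.+1%:R) j * (- m.+1%:R + j%:R) * (- m.+1%:R + j.+1%:R) / (- m.+1%:R).
Proof.
have hm : (- m.+1%:R : R) != 0 by rewrite oppr_eq0 natS_neq0.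
apply: (mulfI hm); rewrite -pochN_Sl !pochS; field; by rewrite nat1r natS_neq0.
Qed.

Lemma rec b m : 0 < b ->
  meixner m.+2 b c = ('X - (bn b m.+1)%:P) * meixner m.+1 b c - lam b m.+1 *: meixner m b c.
Proof.
move=> hb.
rewrite (@meixnerE' m.+2 b m.+3) // (@meixnerE' m.+1 b m.+2) // (@meixnerE' m b m.+3) //.
rewrite -scalerAr S_X; last by rewrite g_high.
rewrite scalerA !S_scale S_sub; apply: S_eq => k _.
have hc := c_neq0; have hc1 := c1_neq0; have hc1' := c1'_neq0.
case: k => [|j].
  rewrite /g /pr !poch0 !expr0 fact0 ?mul1r ?mulr1 ?invr1 ?mulr1 ?mul0r ?subr0.
  rewrite !pochS !exprS /bn /lam /w -!natr1.
  field; rewrite ?hc ?hc1 ?hc1' //=.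
rewrite /g /pr (pochN_Sl m.+1 j) (pochN_Sl2 m j) (pochS (- m.+1%:R) j).
rewrite !pochS !exprS factS natrM.
have hB := poch_gt0 j hb; have hP := poch_gt0 m hb.
have hF := fact_neq0 j.
have hbj : b + j%:R != 0 by rewrite gt_eqF // ltr_wpDr.
have hj := natS_neq0 j; have hm := natS_neq0 m.
rewrite /bn /lam /w /u -!natr1.
field; first by rewrite !natr1 hF hj hbj (gt_eqF hB) hc hm hc1' hc1.
by do 2 apply: leqW.
Qed.


Lemma meixner0 b : meixner 0 b c = 1.
Proof.
rewrite meixnerE /S big_ord1 /g !poch0 expr0 /pochNX big_ord0 /=.
by rewrite expr0 fact0 !(mul1r, mulr1, invr1, scale1r).
Qed.

Lemma meixner1 b : b != 0 -> meixner 1 b c = 'X - (bn b 0)%:P.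
Proof.
move=> hb.
have -> : 'X - (bn b 0)%:P = ('X - (bn b 0)%:P) * S 1 (fun k => (k == 0%N)%:R).
  by rewrite /S big_ord1 /= /pochNX big_ord0 scale1r mulr1.
rewrite S_X // meixnerE S_scale; apply: S_eq => k.
have hc := c_neq0; have hc1 := c1_neq0; have hc1' := c1'_neq0.
case: k => [|[|k]] // _.
  rewrite /g /pr !poch0 /= /poch big_ord1 /= !expr0 expr1 /bn /w fact0; field.
  by rewrite hc1' hc1.
rewrite /g /pr /= /poch !big_ord1 /= !expr1 /bn /w /u factS fact0; field.
by rewrite hc1' hb hc hc1.
Qed.


Lemma poch_shift2 (a : R) n : a + n.+1%:R != 0 ->
  poch a n.+1 = a * (a + 1) * poch (a + 2) n / (a + n.+1%:R).
Proof.
move=> h; rewrite -[LHS](mulfK h) -pochS pochSl pochSl -addrA.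
by rewrite (_ : (1 + 1 : R) = 2) // mulrA.
Qed.


Lemma u_lt0 : u < 0.
Proof.
by rewrite /u subr_lt0 invf_gt1.
Qed.

Lemma w_lt0 : w < 0.
Proof. by rewrite /w pmulr_rlt0 // invr_lt0 subr_lt0. Qed.

Lemma pochu_ge0 n k : (k <= n)%N -> 0 <= poch (- n%:R) k * u ^+ k.
Proof.
elim: k => [|k IH] hk; first by rewrite poch0 expr0 mulr1.
rewrite pochS exprS (mulrC u) mulrA -(mulrA (poch _ _)) (mulrC _ (u ^+ k)) !mulrA -mulrA.
apply: mulr_ge0; first by apply: IH; rewrite ltnW.
rewrite nmulr_lge0 ?u_lt0 // addrC subr_le0 ler_nat ltnW //.
Qed.

Lemma pos_meixner n b x : 0 < b -> x <= 0 -> 0 < (-1) ^+ n * (meixner n b c).[x].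
Proof.
move=> hb hx; rewrite meixnerE hornerZ /S horner_sum mulrA.
apply: mulr_gt0.
  rewrite mulrA -exprMn; apply: mulr_gt0; last exact: poch_gt0.
  by apply: exprn_gt0; rewrite mulN1r oppr_gt0 w_lt0.
rewrite big_ord_recl /= hornerZ /pochNX big_ord0 hornerC /g poch0 expr0 fact0 !mulr1.
rewrite poch0 invr1 mulr1; apply: ltr_wpDr => //; apply: sumr_ge0 => i _.
rewrite hornerZ horner_prod; apply: mulr_ge0.
  apply: mulr_ge0; first by apply: pochu_ge0; have := ltn_ord i.
  by rewrite invr_ge0 mulr_ge0 // ltW // poch_gt0.
apply: prodr_ge0 => k _; rewrite hornerD hornerN hornerC hornerX subr_ge0.
by rewrite (le_trans hx).
Qed.

Section Rel.
Variable beta : R.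
Hypothesis hb1 : -2 < beta.
Hypothesis hb2 : beta < -1.

Lemma bS_neq0 n : beta + n.+1%:R != 0.
Proof.
have h1 := hb1; have h2 := hb2.
case: n => [|n]; first by rewrite lt_eqF //; lra.
rewrite gt_eqF //; have := ler0n R n; rewrite -!natr1; lra.
Qed.

Definition CC n := (n%:R * (1 - c) + beta) / (n%:R + beta).
Definition DD n := n%:R * c / (n%:R + beta).

Lemma rel m : meixner m.+1 beta c =
  CC m.+1 *: meixner m.+1 (beta + 2) c +
  DD m.+1 *: (('X - (A_n beta c m.+1)%:P) * meixner m (beta + 2) c).
Proof.
have h1 := hb1; have h2 := hb2.
have hb0 : 0 < beta + 2 by lra.
rewrite (@meixnerE' m.+1 beta m.+2) // (@meixnerE' m.+1 (beta + 2) m.+2) //.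
rewrite (@meixnerE' m (beta + 2) m.+1) //.
rewrite -scalerAr S_X; last by rewrite g_high.
rewrite !scalerA !S_scale S_add; apply: S_eq => k _.
have hc := c_neq0; have hc1 := c1_neq0; have hc1' := c1'_neq0.
have hbm := bS_neq0 m; have hP := poch_gt0 m hb0.
have hbe : beta != 0 by rewrite lt_eqF //; lra.
have hbe1 : beta + 1 != 0 by rewrite lt_eqF //; lra.
have hm := natS_neq0 m.
case: k => [|j].
  rewrite /g /pr !poch0 !expr0 fact0 ?mul1r ?mulr1 ?invr1 ?mulr1 ?mul0r ?subr0.
  rewrite (poch_shift2 hbm) pochS exprS /CC /DD /A_n /w -!natr1.
  by field; rewrite hc1 natr1 addrC hbm.
have hj := natS_neq0 j; have hF := fact_neq0 j.
have hB := poch_gt0 j hb0.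
have hbj : beta + 2 + j%:R != 0 by rewrite gt_eqF // ltr_wpDr.
have hbj1 := bS_neq0 j.
rewrite /g /pr (pochN_Sl m j) (poch_shift2 (bS_neq0 j)) (pochS (beta+2) j) (pochS (-m%:R) j).
rewrite (poch_shift2 hbm) (pochS (beta+2) m) !exprS factS natrM.
rewrite /CC /DD /A_n /w /u -!natr1.
field.
have e2 : (0 + 1 + 1 : R) = 2 by rewrite add0r.
rewrite e2 (gt_eqF hB) hF hc1 hbj hc hbe1 hbe (addrC (m%:R + 1)) !natr1 hbm hj hbj1.
done.
Qed.

End Rel.

Lemma lam_gt0 b m : 0 < b -> 0 < lam b m.+1.
Proof.
move=> hb; rewrite /lam; apply: divr_gt0; last by rewrite exprn_gt0 // subr_gt0.
apply: mulr_gt0 => //; apply: mulr_gt0; first by rewrite ltr0n.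
by rewrite -natr1; have := ler0n R m; move: hb; lra.
Qed.

Lemma interl b : 0 < b -> forall m, exists y z : nat -> R,
  meixner m.+1 b c = \prod_(i < m.+1) ('X - (y i)%:P) /\
  meixner m b c = \prod_(i < m) ('X - (z i)%:P) /\
  (forall i, (i < m)%N -> y i < z i /\ z i < y i.+1).
Proof.
move=> hb; elim => [|m [y [z [hy [hz hyz]]]]].
  exists (fun _ => bn b 0), (fun _ => 0); split; last split => //.
    by rewrite meixner1 ?gt_eqF // big_ord1.
  by rewrite meixner0 big_ord0.
have yinc : forall i, (i.+1 < m.+1)%N -> y i < y i.+1.
  by move=> i hi; have [h1 h2] := hyz i hi; apply: lt_trans h1 h2.
set q2 := meixner m.+2 b c.
have hrec : q2 = ('X - (bn b m.+1)%:P) * meixner m.+1 b c + - (lam b m.+1 *: meixner m b c).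
  by rewrite /q2 rec.
have hs1 : size (('X - (bn b m.+1)%:P) * meixner m.+1 b c) = m.+3.
  rewrite hy size_Mmonic ?monic_prod_XsubC ?size_prod_ord ?size_XsubC //.
  by rewrite -size_poly_gt0 size_XsubC.
have hm1 : ('X - (bn b m.+1)%:P) * meixner m.+1 b c \is monic.
  by rewrite hy monicMl ?monicXsubC // monic_prod_XsubC.
have hs0 : (size (- (lam b m.+1 *: meixner m b c)) < m.+3)%N.
  rewrite size_polyN (leq_ltn_trans (size_scale_leq _ _)) // hz size_prod_ord.
  by rewrite ltnS leqW.
have hsz2 : size q2 = m.+3 by rewrite hrec size_polyDl ?hs1.
have hmon2 : q2 \is monic.
  by rewrite monicE hrec lead_coefDl ?hs1 //; apply/eqP/monicP.
have hlc : 0 < lead_coef q2 by rewrite (monicP hmon2).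
have [n0 hn0] := poly_pinfty_gt_lc hlc.
rewrite (monicP hmon2) in hn0.
set a := Num.min 0 (y 0%N - 1).
set N := Num.max n0 (y m + 1).
pose gg j := if j == 0%N then a else if j == m.+2 then N else y j.-1.
have gg0 : gg 0%N = a by [].
have ggN : gg m.+2 = N by rewrite /gg eqxx.
have ggi : forall i, (i <= m)%N -> gg i.+1 = y i.
  by move=> i hi; rewrite /gg /= eqSS; case: eqP => [e|//]; by rewrite e ltnn in hi.
have ha0 : a <= 0 by rewrite ge_min lexx.
have hay : a < y 0%N by rewrite gt_min; apply/orP; right; rewrite ltrBlDr ltrDl ltr01.
have hN : y m < N by rewrite lt_max; apply/orP; right; rewrite ltrDl ltr01.
have hgg : forall j, (j < m.+2)%N -> gg j < gg j.+1.
  case => [|j] hj; first by rewrite gg0 ggi.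
  rewrite ggi; last by rewrite -ltnS.
  have [->|hjm] := eqVneq j m; first by rewrite ggN.
  rewrite ggi; last by rewrite ltn_neqAle hjm -ltnS.
  by apply: yinc; rewrite ltn_neqAle hjm /= -ltnS.
have hsg : forall j, (j <= m.+2)%N -> 0 < (-1) ^+ (m.+2 - j) * q2.[gg j].
  case => [|j] hj; first by rewrite gg0 subn0 pos_meixner.
  have [->|hjm] := eqVneq j m.+1.
    rewrite ggN subnn expr0 mul1r; apply: lt_le_trans ltr01 _; apply: hn0.
    by rewrite le_max lexx.
  have him : (j <= m)%N by rewrite -ltnS ltn_neqAle hjm.
  rewrite ggi // hrec hornerD hornerN hornerZ hornerM hy prod_root // mulr0.
  rewrite subSS subSn // exprS.
  have -> : (-1 * (-1) ^+ (m - j) * (0 + - (lam b m.+1 * (meixner m b c).[y j]))) =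
    lam b m.+1 * ((-1) ^+ (m - j) * (meixner m b c).[y j]) by ring.
  apply: mulr_gt0; first exact: lam_gt0.
  rewrite hz; apply: sign_prod => // l hl.
    have [_ h2] := hyz l (leq_trans hl him).
    apply: lt_le_trans h2 _; apply: (incr_le yinc) => //.
  move=> hlm; have [h1 _] := hyz l hlm.
  apply: le_lt_trans h1; apply: (incr_le yinc) => //; exact: ltnW.
have [r [hr hrg]] := roots_between hmon2 hsz2 hgg hsg.
exists r, y; split => //; split => // i hi.
have [_ h1] := hrg i (leq_trans hi (leqnSn _)).
have [h2 _] := hrg i.+1 hi.
move: h1 h2; rewrite !ggi // => h1 h2; split => //.
Qed.

Lemma p_roots beta m : -2 < beta -> beta < -1 -> (1 <= m)%N -> beta / (c - 1) < m.+1%:R ->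
  exists y z x : nat -> R,
   [/\ meixner m.+1 (beta + 2) c = \prod_(i < m.+1) ('X - (y i)%:P),
       (forall i, (i < m)%N -> y i < z i /\ z i < y i.+1),
       meixner m.+1 beta c = \prod_(i < m.+1) ('X - (x i)%:P),
       (forall i, (i < m)%N -> x i < z i /\ z i < x i.+1)
     & (forall i, (i < m.+1)%N -> (x i < y i <-> A_n beta c m.+1 < y i))].
Proof.
move=> hb1 hb2 hm hn.
have hb0 : 0 < beta + 2 by lra.
have c0' := c0; have c1' := c1.
have [y [z [hy [hz hyz]]]] := interl hb0 m.
have hC : 0 < m.+1%:R * (1 - c) + beta.
  rewrite ltr_ndivrMr in hn; last by lra.
  lra.
have hnpos : 0 < m.+1%:R :> R by rewrite ltr0n.
have hD : 0 < m.+1%:R + beta.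
  have : 0 < m.+1%:R * c by apply: mulr_gt0.
  lra.
have hCp : 0 < CC beta m.+1 by rewrite /CC divr_gt0.
have hDp : 0 < DD beta m.+1 by rewrite /DD divr_gt0 // mulr_gt0.
have hCD : CC beta m.+1 + DD beta m.+1 = 1.
  by rewrite /CC /DD; field; rewrite nat1r gt_eqF.
set C := CC beta m.+1; set D := DD beta m.+1; set A := A_n beta c m.+1.
have hrel : meixner m.+1 beta c =
    C *: meixner m.+1 (beta + 2) c + D *: (('X - A%:P) * meixner m (beta + 2) c).
  by rewrite /C /D /A rel.
set P := meixner m.+1 beta c.
have yinc : forall i, (i.+1 < m.+1)%N -> y i < y i.+1.
  by move=> i hi; have [h1 h2] := hyz i hi; apply: lt_trans h1 h2.
have zinc : forall i, (i.+1 < m)%N -> z i < z i.+1.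
  move=> i hi; have [_ h1] := hyz i (ltnW hi); have [h2 _] := hyz i.+1 hi.
  exact: lt_trans h1 h2.
have hmq : meixner m.+1 (beta + 2) c \is monic by rewrite hy monic_prod_XsubC.
have hsq : size (meixner m.+1 (beta + 2) c) = m.+2 by rewrite hy size_prod_ord.
have hmq2 : ('X - A%:P) * meixner m (beta + 2) c \is monic.
  by rewrite hz monicMl ?monicXsubC // monic_prod_XsubC.
have hsq2 : size (('X - A%:P) * meixner m (beta + 2) c) = m.+2.
  rewrite hz size_Mmonic ?monic_prod_XsubC ?size_prod_ord ?size_XsubC //.
  by rewrite -size_poly_gt0 size_XsubC.
have [hmonP hsP] : P \is monic /\ size P = m.+2.
  apply: monic_of_coef.
    rewrite /P hrel; apply: leq_trans (size_polyD _ _) _; rewrite geq_max.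
    apply/andP; split; apply: leq_trans (size_scale_leq _ _) _; by rewrite ?hsq ?hsq2.
  have e1 : (meixner m.+1 (beta + 2) c)`_m.+1 = 1.
    by move/monicP: hmq; rewrite lead_coefE hsq.
  have e2 : (('X - A%:P) * meixner m (beta + 2) c)`_m.+1 = 1.
    by move/monicP: hmq2; rewrite lead_coefE hsq2.
  rewrite /P hrel coefD coefZ e1 coefZ e2 !mulr1. exact: hCD.
have hlc : 0 < lead_coef P by rewrite (monicP hmonP).
have [n0 hn0] := poly_pinfty_gt_lc hlc.
rewrite (monicP hmonP) in hn0.
set a := Num.min (Num.min 0 A) (z 0%N - 1).
set N := Num.max n0 (z m.-1 + 1).
pose gg j := if j == 0%N then a else if j == m.+1 then N else z j.-1.
have gg0 : gg 0%N = a by [].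
have ggN : gg m.+1 = N by rewrite /gg eqxx.
have ggi : forall i, (i < m)%N -> gg i.+1 = z i.
  by move=> i hi; rewrite /gg /= eqSS; case: eqP => [e|//]; by rewrite e ltnn in hi.
have ha0 : a <= 0 by rewrite !ge_min lexx.
have haA : a <= A by rewrite !ge_min lexx orbT.
have haz : a < z 0%N by rewrite gt_min; apply/orP; right; rewrite ltrBlDr ltrDl ltr01.
have hN : z m.-1 < N by rewrite lt_max; apply/orP; right; rewrite ltrDl ltr01.
have hgg : forall j, (j < m.+1)%N -> gg j < gg j.+1.
  case => [|j] hj; first by rewrite gg0 ggi.
  rewrite ggi //.
  have [ejm|hjm] := eqVneq j.+1 m.
    by rewrite ejm ggN; have := hN; rewrite -ejm.
  rewrite ggi; last by rewrite ltn_neqAle hjm.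
  by apply: zinc; rewrite ltn_neqAle hjm.
have hsg : forall j, (j <= m.+1)%N -> 0 < (-1) ^+ (m.+1 - j) * P.[gg j].
  case => [|j] hj.
    rewrite gg0 subn0 /P hrel hornerD (hornerZ C) (hornerZ D) hornerM hornerD hornerN hornerX hornerC.
    rewrite exprS.
    have -> : -1 * (-1) ^+ m * (C * (meixner m.+1 (beta + 2) c).[a] +
       D * ((a - A) * (meixner m (beta + 2) c).[a])) =
       C * ((-1) ^+ m.+1 * (meixner m.+1 (beta + 2) c).[a]) +
       D * (A - a) * ((-1) ^+ m * (meixner m (beta + 2) c).[a]) by rewrite exprS; ring.
    apply: ltr_wpDr.
      apply: mulr_ge0; first by apply: mulr_ge0; [exact: ltW | rewrite subr_ge0].
      exact: ltW (pos_meixner _ hb0 ha0).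
    by apply: mulr_gt0 => //; apply: pos_meixner.
  have [->|hjm] := eqVneq j m.
    rewrite ggN subnn expr0 mul1r; apply: lt_le_trans ltr01 _; apply: hn0.
    by rewrite le_max lexx.
  have him : (j < m)%N by rewrite ltn_neqAle hjm -ltnS.
  rewrite ggi // /P hrel hornerD (hornerZ C) (hornerZ D) hornerM hz prod_root // mulr0 mulr0 addr0.
  rewrite mulrCA; apply: mulr_gt0 => //.
  rewrite hy; apply: sign_prod => // l hl.
    have [h1 _] := hyz j him.
    apply: le_lt_trans h1; apply: (incr_le yinc) => //; by rewrite -ltnS (leq_trans hl).
  move=> hlm; have [_ h2] := hyz j him.
  apply: lt_le_trans h2 _; apply: (incr_le yinc) => //.
have [x [hx hxg]] := roots_between hmonP hsP hgg hsg.
exists y, z, x; split => //.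
  move=> i hi; have [_ h1] := hxg i (ltnW hi); have [h2 _] := hxg i.+1 hi.
  by move: h1 h2; rewrite !ggi.
move=> i hi.
have him : (i <= m)%N by rewrite -ltnS.
have zy : forall l, (l < i)%N -> z l < y i.
  move=> l hl; have [_ h2] := hyz l (leq_trans hl him).
  apply: lt_le_trans h2 _; apply: (incr_le yinc) => //.
have yz : forall l, (i <= l)%N -> (l < m)%N -> y i < z l.
  move=> l hl hlm; have [h1 _] := hyz l hlm.
  apply: le_lt_trans h1; apply: (incr_le yinc) => //; exact: ltnW.
have xz : forall l, (l < m)%N -> x l < z l.
  by move=> l hl; have [_ h] := hxg l (ltnW hl); move: h; rewrite ggi.
have zx : forall l, (l < m)%N -> z l < x l.+1.
  by move=> l hl; have [h _] := hxg l.+1 hl; move: h; rewrite ggi.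
have xlt : forall l, (l < i)%N -> x l < y i.
  move=> l hl; apply: lt_trans (xz l (leq_trans hl him)) (zy l hl).
have xgt : forall l, (i < l)%N -> (l < m.+1)%N -> y i < x l.
  case => [//|l] hl hlm; apply: lt_trans (yz l _ _) (zx l _) => //.
have qmy : 0 < (-1) ^+ (m - i) * (meixner m (beta + 2) c).[y i].
  by rewrite hz; apply: sign_prod.
have Pyi : P.[y i] = D * (y i - A) * (meixner m (beta + 2) c).[y i].
  rewrite /P hrel hornerD (hornerZ C) (hornerZ D) hornerM hy prod_root // mulr0 add0r.
  by rewrite hornerD hornerN hornerX hornerC mulrA.
have key : (-1) ^+ (m - i) * P.[y i] =
    D * (y i - A) * ((-1) ^+ (m - i) * (meixner m (beta + 2) c).[y i]).
  by rewrite Pyi; ring.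
split => [hxy|hAy].
  have hs : 0 < (-1) ^+ (m.+1 - i.+1) * P.[y i].
    rewrite hx; apply: sign_prod => // l hl.
      by move: hl; rewrite ltnS leq_eqVlt => /orP [/eqP -> //| hl]; apply: xlt.
  move: hs; rewrite subSS key pmulr_lgt0 // pmulr_rgt0 //.
  by rewrite subr_gt0.
have hpos : 0 < (-1) ^+ (m - i) * P.[y i].
  by rewrite key; apply: mulr_gt0 => //; apply: mulr_gt0 => //; rewrite subr_gt0.
case: (ltrgtP (x i) (y i)) => // hxy.
  have hs : 0 < (-1) ^+ (m.+1 - i) * P.[y i].
    rewrite hx; apply: sign_prod; [exact: ltnW | exact: xlt | move=> l hl hlm].
    move: hl; rewrite leq_eqVlt => /orP [/eqP <- //| hl]; by apply: xgt.
  move: hs; rewrite subSn // exprS -mulrA mulN1r oppr_gt0 => hs.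
  by have := lt_trans hs hpos; rewrite ltxx.
by move: hpos; rewrite hx -hxy prod_root // mulr0 ltxx.
Qed.

End Alg.

Lemma key_lemma (R : rcfType) (beta c : R) n :
  -2 < beta -> beta < -1 -> 0 < c -> c < 1 -> (3 <= n)%N -> beta / (c - 1) < n%:R ->
  exists x y : nat -> R,
   [/\ zeros_enum (meixner n beta c) n (mkseq x n),
       zeros_enum (meixner n (beta + 2) c) n (mkseq y n),
       (forall xs, zeros_enum (meixner n beta c) n xs -> xs = mkseq x n),
       (forall ys, zeros_enum (meixner n (beta + 2) c) n ys -> ys = mkseq y n)
     & 0 < y 0%N /\ (interlace n (mkseq x n) (mkseq y n) <-> A_n beta c n < y 0%N)].
Proof.
move=> hb1 hb2 hc0 hc1; case: n => [//|m] hm hn.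
have hm1 : (1 <= m)%N by rewrite -ltnS (leq_trans _ hm).
have [y [z [x [hy hyz hx hxz heq]]]] := p_roots hc0 hc1 hb1 hb2 hm1 hn.
have yinc : forall i, (i.+1 < m.+1)%N -> y i < y i.+1.
  by move=> i hi; have [h1 h2] := hyz i hi; apply: lt_trans h1 h2.
have xinc : forall i, (i.+1 < m.+1)%N -> x i < x i.+1.
  by move=> i hi; have [h1 h2] := hxz i hi; apply: lt_trans h1 h2.
have [zx ux] := zeros_prod hx xinc.
have [zy uy] := zeros_prod hy yinc.
have hy0 : 0 < y 0%N.
  rewrite ltNge; apply/negP => h.
  have hb0 : 0 < beta + 2 by lra.
  have := pos_meixner hc0 hc1 m.+1 hb0 h.
  by rewrite hy prod_root // mulr0 ltxx.
exists x, y; split => //; split => //.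
split.
  move=> hint; have [h _] := hint 0%N (ltn0Sn _).
  by move: h; rewrite !nth_mkseq // => /(heq 0%N (ltn0Sn _)).
move=> hA i hi; rewrite [(mkseq x _)`_i]nth_mkseq // [(mkseq y _)`_i]nth_mkseq //; split.
  apply/(heq i hi); apply: lt_le_trans hA _; apply: (incr_le yinc) => //.
move=> hi1; rewrite nth_mkseq //.
have [h1 _] := hyz i hi1; have [_ h2] := hxz i hi1.
exact: lt_trans h1 h2.
Qed.

Unset Implicit Arguments. Set Strict Implicit.

Theorem theorem4p4 (R : rcfType) (beta c : R) :
  -2 < beta -> beta < -1 -> 0 < c -> c < 1 ->
  (* (a) *)
  (forall n : nat, (3 <= n)%N ->
     beta / (c - 1) - (beta + 1) <= n%:R ->
     A_n beta c n <= 0 /\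
     (exists xs ys, zeros_enum (meixner n beta c) n xs /\
                    zeros_enum (meixner n (beta + 2) c) n ys) /\
     (forall xs ys, zeros_enum (meixner n beta c) n xs ->
                    zeros_enum (meixner n (beta + 2) c) n ys ->
                    interlace n xs ys))
  /\
  (* (b) *)
  ((forall n1 n2 : nat, (3 <= n1)%N -> (3 <= n2)%N ->
      beta / (c - 1) - (beta + 2) < n1%:R -> n1%:R < beta / (c - 1) - (beta + 1) ->
      beta / (c - 1) - (beta + 2) < n2%:R -> n2%:R < beta / (c - 1) - (beta + 1) ->
      n1 = n2) /\
   (forall ns : nat, (3 <= ns)%N ->
      beta / (c - 1) - (beta + 2) < ns%:R -> ns%:R < beta / (c - 1) - (beta + 1) ->
      0 < A_n beta c ns /\ A_n beta c ns < 1 /\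
      (beta / (c - 1) < ns%:R ->
         (exists xs ys, zeros_enum (meixner ns beta c) ns xs /\
                        zeros_enum (meixner ns (beta + 2) c) ns ys) /\
         (forall xs ys, zeros_enum (meixner ns beta c) ns xs ->
                        zeros_enum (meixner ns (beta + 2) c) ns ys ->
                        (interlace ns xs ys <-> A_n beta c ns < ys`_0))))).
Proof.
move=> hb1 hb2 hc0 hc1; split.
  move=> n hn3 hcond.
  have hA : A_n beta c n <= 0 by rewrite /A_n; lra.
  have hlt : beta / (c - 1) < n%:R by lra.
  have [x [y [zx zy ux uy [hy0 heq]]]] := key_lemma hb1 hb2 hc0 hc1 hn3 hlt.
  split => //; split; first by exists (mkseq x n), (mkseq y n).
  move=> xs ys hxs hys; rewrite (ux _ hxs) (uy _ hys); apply/heq.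
  exact: le_lt_trans hA hy0.
split.
  move=> n1 n2 _ _ h1 h2 h3 h4.
  case: (ltngtP n1 n2) => // h.
    have : (n1%:R + 1 <= n2%:R :> R) by rewrite natr1 ler_nat.
    move=> hh; exfalso; lra.
  have : (n2%:R + 1 <= n1%:R :> R) by rewrite natr1 ler_nat.
  move=> hh; exfalso; lra.
move=> ns hn3 hl hu.
split; first by rewrite /A_n; lra.
split; first by rewrite /A_n; lra.
move=> hlt.
have [x [y [zx zy ux uy [hy0 heq]]]] := key_lemma hb1 hb2 hc0 hc1 hn3 hlt.
split; first by exists (mkseq x ns), (mkseq y ns).
move=> xs ys hxs hys; rewrite (ux _ hxs) (uy _ hys) nth_mkseq //.
by rewrite (leq_trans _ hn3).
Qed.
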